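(* Let $\Omega_n=\dfrac{\pi^{n/2}}{\Gamma\left(\frac n2+1\right)}$ for $n\in\mathbb{N}_0$, and for $j\in\mathbb{N}$ let \[ \lambda_j=(-1)^j\left\{2B_{j+1}(1)-B_{j+1}\left(\tfrac12\right)-B_{j+1}\left(\tfrac32\right)\right\}\frac{2^j}{j(j+1)}, \] where $B_m(x)$ are the Bernoulli polynomials. Let $t_0=\frac12$ and let $t_1,t_2,\dots$ be the solution of the infinite system \[ \sum_{j=1}^m(-1)^{j+1}\frac{t_{m-j}}{j}=\lambda_m\qquad(m\in\mathbb{N}). \] Then, as $n\to\infty$, the following asymptotic formula holds: \[ \frac{\Omega_n^2}{\Omega_{n-1}\Omega_{n+1}}\sim\left(1+\frac1n\right)^{\sum_{j=0}^\infty\frac{t_j}{n^j}}. \]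
   Context: $\Omega_n$ is the volume of the unit ball in $\mathbb{R}^n$; $\Gamma$ is Euler's gamma function. The Bernoulli polynomials are defined by $\frac{te^{xt}}{e^t-1}=\sum_{m\ge0}B_m(x)\frac{t^m}{m!}$. The formula is understood as an asymptotic expansion: for every $N$, $\ln\frac{\Omega_n^2}{\Omega_{n-1}\Omega_{n+1}}-\ln\left(1+\frac1n\right)\sum_{j=0}^{N}t_jn^{-j}=O(n^{-N-2})$ as $n\to\infty$. *)

(* Defs.v *)
From Stdlib Require Import Reals.
From Coquelicot Require Import Coquelicot.
Open Scope R_scope.

Definition Gamma (x : R) : R :=
  RInt_gen (fun t => Rpower t (x - 1) * exp (- t))
           (at_right 0) (Rbar_locally p_infty).

Definition Omega (n : nat) : R :=
  Rpower PI (INR n / 2) / Gamma (INR n / 2 + 1).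

(* B is the family of Bernoulli polynomials: t e^(xt)/(e^t - 1) = sum_m B_m(x) t^m/m!
   (the generating function, for 0 < |t| < 1, inside the radius 2 pi). *)
Definition is_bernoulli_polys (B : nat -> R -> R) : Prop :=
  forall x t, t <> 0 -> Rabs t < 1 ->
    is_series (fun m => B m x * t ^ m / INR (Factorial.fact m))
              (t * exp (x * t) / (exp t - 1)).

Definition lambda (B : nat -> R -> R) (j : nat) : R :=
  (-1) ^ j * (2 * B (S j) 1 - B (S j) (1/2) - B (S j) (3/2))
  * 2 ^ j / (INR j * INR (S j)).

Definition is_t_sequence (B : nat -> R -> R) (t : nat -> R) : Prop :=
  t O = 1/2 /\
  forall m : nat, (1 <= m)%nat ->
    sum_n_m (fun j => (-1) ^ (S j) * t (m - j)%nat / INR j) 1 m = lambda B m.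

(* Main.v *)
Require Import Defs.
From Stdlib Require Import Reals Lra Lia.
From Stdlib Require Classical_Prop.
From Coquelicot Require Import Coquelicot.
Open Scope R_scope.

Fixpoint ssum (f : nat -> R) (q : nat) : R :=
  match q with O => 0 | S q' => ssum f q' + f q' end.

Lemma ssum_ext f g q : (forall i, (i < q)%nat -> f i = g i) -> ssum f q = ssum g q.
Proof. induction q; simpl; intros H; [reflexivity|].
  rewrite IHq by (intros; apply H; lia). rewrite H by lia. reflexivity. Qed.

Lemma ssum_plus f g q : ssum (fun i => f i + g i) q = ssum f q + ssum g q.
Proof. induction q; simpl; [lra|]. rewrite IHq; lra. Qed.

Lemma ssum_scal k f q : ssum (fun i => k * f i) q = k * ssum f q.
Proof. induction q; simpl; [lra|]. rewrite IHq; lra. Qed.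

Lemma ssum_shift f q : ssum f (S q) = f O + ssum (fun i => f (S i)) q.
Proof. induction q. simpl; lra. change (ssum f (S (S q))) with (ssum f (S q) + f (S q)).
  rewrite IHq. simpl. lra. Qed.

Lemma ssum_zero f q : (forall i, (i < q)%nat -> f i = 0) -> ssum f q = 0.
Proof. intros H. rewrite (ssum_ext f (fun _ => 0)) by auto. induction q; simpl; [lra|]. rewrite IHq; [lra|].
  intros; apply H; lia. Qed.

Lemma ssum_abs f q : Rabs (ssum f q) <= ssum (fun i => Rabs (f i)) q.
Proof. induction q; simpl. rewrite Rabs_R0; lra.
  eapply Rle_trans; [apply Rabs_triang|]. lra. Qed.

Lemma ssum_nonneg f q : (forall i, 0 <= f i) -> 0 <= ssum f q.
Proof. intros H; induction q; simpl; [lra|]. specialize (H q); lra. Qed.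

Lemma ssum_ge_term f q i : (forall i, 0 <= f i) -> (i < q)%nat -> f i <= ssum f q.
Proof. intros H; induction q; intros Hi; [lia|]. simpl.
  destruct (Nat.eq_dec i q) as [->|Hne].
  - pose proof (ssum_nonneg f q H); lra.
  - pose proof (H q). assert (f i <= ssum f q) by (apply IHq; lia). lra. Qed.

Lemma ssum_le f g q : (forall i, (i < q)%nat -> f i <= g i) -> ssum f q <= ssum g q.
Proof. induction q; simpl; intros H; [lra|].
  assert (ssum f q <= ssum g q) by (apply IHq; intros; apply H; lia).
  specialize (H q ltac:(lia)). lra. Qed.

Definition psum (c : nat -> R) (p : nat) (u : R) : R := ssum (fun m => c m * u ^ m) p.

Lemma psum_S c p u : psum c (S p) u = c O + u * psum (fun i => c (S i)) p u.
Proof. unfold psum. rewrite ssum_shift. simpl. rewrite <- ssum_scal.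
  rewrite (ssum_ext (fun i => c (S i) * (u * u ^ i)) (fun i => u * (c (S i) * u ^ i))).
  ring. intros; ring. Qed.

Definition conv (c d : nat -> R) (m : nat) : R := ssum (fun i => c i * d (m - i)%nat) (S m).

Lemma conv_0 c d : conv c d O = c O * d O.
Proof. unfold conv. simpl. ring. Qed.

Lemma conv_S c d m : conv c d (S m) = c (S m) * d O + conv c (fun i => d (S i)) m.
Proof. unfold conv. change (ssum (fun i => c i * d (S m - i)%nat) (S (S m)))
  with (ssum (fun i => c i * d (S m - i)%nat) (S m) + c (S m) * d (S m - S m)%nat).
  rewrite Nat.sub_diag. rewrite (ssum_ext (fun i => c i * d (S m - i)%nat) (fun i => c i * d (S (m - i))%nat)).
  ring. intros i Hi. replace (S m - i)%nat with (S (m - i)) by lia. reflexivity. Qed.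

Fixpoint asym (h : R -> R) (c : nat -> R) (p : nat) : Prop :=
  match p with
  | O => exists C, forall u, 0 < u <= 1/2 -> Rabs (h u) <= C
  | S q => asym (fun u => (h u - c O) / u) (fun i => c (S i)) q
  end.

Lemma asym_ext p : forall h1 h2 c1 c2, (forall u, 0 < u <= 1/2 -> h1 u = h2 u) ->
  (forall i, (i < p)%nat -> c1 i = c2 i) -> asym h1 c1 p -> asym h2 c2 p.
Proof. induction p; simpl; intros h1 h2 c1 c2 Hh Hc H.
- destruct H as [C HC]. exists C. intros u Hu. rewrite <- Hh by exact Hu. auto.
- apply (IHp (fun u => (h1 u - c1 O)/u) _ (fun i => c1 (S i))); [| |exact H].
  + intros u Hu; cbv beta; rewrite Hh, Hc by (auto; lia). reflexivity.
  + intros i Hi; apply Hc; lia.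
Qed.

Lemma asym_ext' p h1 h2 c1 c2 : asym h1 c1 p -> (forall u, 0 < u <= 1/2 -> h1 u = h2 u) ->
  (forall i, (i < p)%nat -> c1 i = c2 i) -> asym h2 c2 p.
Proof. intros H A B; exact (asym_ext p h1 h2 c1 c2 A B H). Qed.

Lemma asym_zero p : asym (fun _ => 0) (fun _ => 0) p.
Proof. induction p; simpl. exists 0. intros; rewrite Rabs_R0; lra.
  apply (asym_ext' _ _ _ _ _ IHp). intros u Hu; field; lra. auto. Qed.

Lemma asym_plus p : forall h g c d, asym h c p -> asym g d p ->
  asym (fun u => h u + g u) (fun i => c i + d i) p.
Proof. induction p; simpl; intros h g c d H1 H2.
- destruct H1 as [C1 H1], H2 as [C2 H2]. exists (C1 + C2). intros u Hu.
  eapply Rle_trans; [apply Rabs_triang|]. specialize (H1 u Hu); specialize (H2 u Hu); lra.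
- apply (asym_ext' _ _ _ _ _ (IHp _ _ _ _ H1 H2)).
  + intros u Hu; simpl; field; lra.
  + auto.
Qed.

Lemma asym_scal p : forall k h c, asym h c p -> asym (fun u => k * h u) (fun i => k * c i) p.
Proof. induction p; simpl; intros k h c H1.
- destruct H1 as [C1 H1]. exists (Rabs k * C1). intros u Hu. rewrite Rabs_mult.
  apply Rmult_le_compat_l; [apply Rabs_pos|auto].
- apply (asym_ext' _ _ _ _ _ (IHp k _ _ H1)).
  + intros u Hu; simpl; field; lra.
  + auto.
Qed.

Lemma asym_weak p : forall h c, asym h c (S p) -> asym h c p.
Proof. induction p; intros h c H.
- simpl in *. destruct H as [C HC]. exists (Rabs (c O) + C). intros u Hu.
  assert (H0 : 0 <= C) by (specialize (HC (1/2) ltac:(lra)); pose proof (Rabs_pos ((h (1/2) - c O) / (1/2))); lra).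
  replace (h u) with (c O + u * ((h u - c O) / u)) by (field; lra).
  eapply Rle_trans; [apply Rabs_triang|]. rewrite Rabs_mult, (Rabs_pos_eq u) by lra.
  specialize (HC u Hu). assert (u * Rabs ((h u - c O) / u) <= 1 * C).
  apply Rmult_le_compat; try lra. apply Rabs_pos. lra.
- simpl. apply IHp. exact H.
Qed.

Lemma asym_weak_le q p : forall h c, (q <= p)%nat -> asym h c p -> asym h c q.
Proof. induction p; intros h c Hq H.
- replace q with O by lia. exact H.
- destruct (Nat.eq_dec q (S p)) as [->|Hn]; [exact H|].
  apply IHp; [lia|]. apply asym_weak. exact H. Qed.

Lemma asym_mult p : forall h g c d, asym h c p -> asym g d p ->
  asym (fun u => h u * g u) (conv c d) p.
Proof. induction p; intros h g c d H1 H2.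
- simpl in *. destruct H1 as [C1 H1], H2 as [C2 H2]. exists (C1 * C2). intros u Hu.
  rewrite Rabs_mult. apply Rmult_le_compat; try apply Rabs_pos; auto.
- assert (Hh : asym h c p) by (apply asym_weak; exact H1).
  simpl in H1, H2 |- *.
  pose proof (IHp _ _ _ _ Hh H2) as A1.
  pose proof (asym_scal p (d O) _ _ H1) as A2.
  pose proof (asym_plus p _ _ _ _ A1 A2) as A3.
  apply (asym_ext' _ _ _ _ _ A3).
  + intros u Hu. simpl. rewrite conv_0. field. lra.
  + intros i Hi. simpl. rewrite conv_S. ring.
Qed.

Lemma asym_iff p : forall h c, asym h c p <->
  exists C, forall u, 0 < u <= 1/2 -> Rabs (h u - psum c p u) <= C * u ^ p.
Proof. induction p; intros h c.
- simpl. unfold psum; simpl. split; intros [C HC]; exists C; intros u Hu; specialize (HC u Hu);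
  rewrite ?Rminus_0_r, ?Rmult_1_r in *; auto.
- simpl. rewrite IHp. split; intros [C HC]; exists C; intros u Hu; specialize (HC u Hu);
  rewrite psum_S in *.
  + replace (h u - (c O + u * psum (fun i => c (S i)) p u)) with
      (u * ((h u - c O) / u - psum (fun i => c (S i)) p u)) by (field; lra).
    rewrite Rabs_mult, (Rabs_pos_eq u) by lra.
    replace (C * (u * u ^ p)) with (u * (C * u ^ p)) by ring.
    apply Rmult_le_compat_l; lra.
  + replace ((h u - c O) / u - psum (fun i => c (S i)) p u) with
      ((h u - (c O + u * psum (fun i => c (S i)) p u)) / u) by (field; lra).
    unfold Rdiv. rewrite Rabs_mult, (Rabs_pos_eq (/ u)) by (apply Rlt_le, Rinv_0_lt_compat; lra).
    apply Rmult_le_reg_r with u; [lra|]. rewrite Rmult_assoc, Rinv_l, Rmult_1_r by lra.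
    replace (C * u ^ p * u) with (C * (u * u ^ p)) by ring. exact HC.
Qed.

Lemma small_eq a b K : (forall u, 0 < u <= 1/2 -> Rabs (a - b) <= K * u) -> a = b.
Proof. intros H. destruct (Req_dec a b) as [|Hne]; [auto|exfalso].
  set (e := Rabs (a - b)). assert (He : 0 < e) by (apply Rabs_pos_lt; lra).
  set (u := Rmin (1/2) (e / (2 * (Rabs K + 1)))).
  assert (Hu1 : u <= e / (2 * (Rabs K + 1))) by apply Rmin_r.
  assert (Hu2 : u <= 1/2) by apply Rmin_l.
  assert (Hu0 : 0 < u). { unfold u. apply Rmin_glb_lt. lra. apply Rdiv_lt_0_compat; [lra|].
    pose proof (Rabs_pos K); lra. }
  specialize (H u ltac:(lra)). fold e in H.
  assert (K * u <= Rabs K * u) by (apply Rmult_le_compat_r; [lra|apply RRle_abs]).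
  assert (Rabs K * u <= Rabs K * (e / (2 * (Rabs K + 1)))) by (apply Rmult_le_compat_l; [apply Rabs_pos|lra]).
  assert (Rabs K * (e / (2 * (Rabs K + 1))) < e).
  { pose proof (Rabs_pos K). apply Rmult_lt_reg_r with (2 * (Rabs K + 1)); [lra|].
    field_simplify; [|lra]. nra. }
  lra. Qed.

Lemma asym_unique p : forall h c d, asym h c p -> asym h d p -> forall i, (i < p)%nat -> c i = d i.
Proof. induction p; intros h c d H1 H2 i Hi; [lia|].
  assert (E0 : c O = d O).
  { apply (asym_weak_le 1) in H1; [|lia]. apply (asym_weak_le 1) in H2; [|lia].
    apply asym_iff in H1, H2. destruct H1 as [C1 H1], H2 as [C2 H2].
    apply (small_eq _ _ (C1 + C2)). intros u Hu. specialize (H1 u Hu); specialize (H2 u Hu).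
    unfold psum in *; simpl in *.
    replace (c O - d O) with (-(h u - (0 + c O * 1)) + (h u - (0 + d O * 1))) by ring.
    eapply Rle_trans; [apply Rabs_triang|]. rewrite Rabs_Ropp. lra. }
  destruct i; [exact E0|].
  simpl in H1, H2. rewrite <- E0 in H2.
  apply (IHp _ _ _ H1 H2). lia.
Qed.

Definition cconst (k : R) (i : nat) : R := match i with O => k | S _ => 0 end.

Lemma asym_const k p : asym (fun _ => k) (cconst k) p.
Proof. destruct p; simpl. exists (Rabs k); intros; lra.
  apply (asym_ext' _ _ _ _ _ (asym_zero p)). intros u Hu; simpl; field; lra. auto. Qed.

Definition cid (i : nat) : R := match i with 1%nat => 1 | _ => 0 end.

Lemma asym_id p : asym (fun u => u) cid p.
Proof. destruct p; simpl. exists 1. intros u Hu; rewrite Rabs_pos_eq; lra.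
  apply (asym_ext' _ _ _ _ _ (asym_const 1 p)). intros u Hu; simpl; field; lra.
  intros [|i] _; reflexivity. Qed.

Lemma asym_geo p : asym (fun u => / (1 + u)) (fun i => (-1) ^ i) p.
Proof. induction p; simpl.
- exists 1. intros u Hu. rewrite Rabs_pos_eq. apply Rle_trans with (/1). apply Rinv_le_contravar; lra. lra.
  apply Rlt_le, Rinv_0_lt_compat; lra.
- apply (asym_ext' _ _ _ _ _ (asym_scal p (-1) _ _ IHp)). intros u Hu; simpl; field; lra.
  intros; simpl; ring. Qed.

Definition wf (u : R) : R := u / (1 + u).
Definition cw (i : nat) : R := match i with O => 0 | S j => (-1) ^ j end.

Lemma asym_w p : asym wf cw p.
Proof. destruct p; simpl. exists 1. intros u Hu. unfold wf. rewrite Rabs_pos_eq.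
  apply Rmult_le_reg_r with (1+u); [lra|]. field_simplify; lra. apply Rlt_le, Rdiv_lt_0_compat; lra.
  apply (asym_ext' _ _ _ _ _ (asym_geo p)). intros u Hu; unfold wf; simpl; field; lra. auto. Qed.

Lemma psum_bound c q u : 0 < u <= 1 -> Rabs (psum c q u) <= ssum (fun i => Rabs (c i)) q.
Proof. intros Hu. unfold psum. eapply Rle_trans; [apply ssum_abs|]. apply ssum_le.
  intros i _. rewrite Rabs_mult. rewrite <- (Rmult_1_r (Rabs (c i))) at 2.
  apply Rmult_le_compat_l; [apply Rabs_pos|]. rewrite <- RPow_abs. rewrite Rabs_pos_eq by lra.
  rewrite <- (pow1 i). apply pow_incr. lra. Qed.

Definition trunc (c : nat -> R) (q : nat) (m : nat) : R := if (m <? q)%nat then c m else 0.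

Lemma asym_psum p : forall c q, asym (psum c q) (trunc c q) p.
Proof. induction p; intros c q.
- simpl. exists (ssum (fun i => Rabs (c i)) q). intros u Hu. apply psum_bound. lra.
- destruct q.
  + apply (asym_ext' _ _ _ _ _ (asym_zero (S p))). intros; reflexivity.
    intros i _; unfold trunc; simpl. destruct i; reflexivity.
  + simpl. apply (asym_ext' _ _ _ _ _ (IHp (fun i => c (S i)) q)).
    intros u Hu. rewrite psum_S. unfold trunc; simpl. field; lra.
    intros i _; unfold trunc; simpl. reflexivity.
Qed.

Lemma asym_lin p q : forall (a : nat -> R) (F : nat -> R -> R) (cF : nat -> nat -> R),
  (forall k, (k < q)%nat -> asym (F k) (cF k) p) ->
  asym (fun u => ssum (fun k => a k * F k u) q) (fun m => ssum (fun k => a k * cF k m) q) p.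
Proof. induction q; intros a F cF H.
- simpl. apply asym_zero.
- simpl. apply asym_plus. apply IHq; intros; apply H; lia.
  apply asym_scal. apply H; lia.
Qed.

Fixpoint W (k : nat) : nat -> R :=
  match k with O => cconst 1 | S k' => conv cw (W k') end.

Lemma asym_wpow p k : asym (fun u => wf u ^ k) (W k) p.
Proof. induction k; simpl.
- apply (asym_ext' _ _ _ _ _ (asym_const 1 p)); auto.
- apply asym_mult. apply asym_w. exact IHk.
Qed.

Lemma conv_cw_S X m : conv cw X (S m) = X m - conv cw X m.
Proof. revert X; induction m; intros X.
- unfold conv; simpl. ring.
- rewrite conv_S. rewrite IHm. rewrite (conv_S cw X m). simpl. ring.
Qed.

Lemma C_nn n : Binomial.C n n = 1.
Proof. unfold Binomial.C. rewrite Nat.sub_diag. simpl. field. apply INR_fact_neq_0. Qed.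
Lemma C_n0 n : Binomial.C n 0 = 1.
Proof. unfold Binomial.C. rewrite Nat.sub_0_r. simpl. field. apply INR_fact_neq_0. Qed.

Definition Wc (k m : nat) : R :=
  match k with
  | O => cconst 1 m
  | S k' => if (k <=? m)%nat then (-1) ^ (m - k) * Binomial.C (m - 1) k' else 0
  end.

Lemma W_closed k m : W k m = Wc k m.
Proof. revert m; induction k; intros m; [reflexivity|].
  simpl W. induction m.
  - unfold conv; simpl. ring.
  - rewrite conv_cw_S. rewrite IHm, IHk. clear IHm IHk.
    destruct k as [|k].
    + simpl. destruct m as [|j]; simpl. rewrite C_n0; ring. rewrite !Nat.sub_0_r, !C_n0. ring.
    + unfold Wc.
      destruct (Compare_dec.lt_eq_lt_dec (S k) m) as [[Hlt|Heq]|Hgt].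
      * destruct (Nat.le_exists_sub (S (S k)) m ltac:(lia)) as [d [Hd _]]. subst m.
        replace (S k <=? d + S (S k))%nat with true by (symmetry; apply Nat.leb_le; lia).
        replace (S (S k) <=? d + S (S k))%nat with true by (symmetry; apply Nat.leb_le; lia).
        replace (S (S k) <=? S (d + S (S k)))%nat with true by (symmetry; apply Nat.leb_le; lia).
        replace (d + S (S k) - S k)%nat with (S d) by lia.
        replace (d + S (S k) - S (S k))%nat with d by lia.
        replace (S (d + S (S k)) - S (S k))%nat with (S d) by lia.
        replace (d + S (S k) - 1)%nat with (S k + d)%nat by lia.
        replace (S (d + S (S k)) - 1)%nat with (S (S k + d))%nat by lia.
        rewrite <- (pascal (S k + d) k) by lia. simpl. ring.
      * subst m. rewrite Nat.leb_refl.
        replace (S (S k) <=? S k)%nat with false by (symmetry; apply Nat.leb_gt; lia).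
        replace (S (S k) <=? S (S k))%nat with true by (symmetry; apply Nat.leb_le; lia).
        rewrite !Nat.sub_diag. replace (S k - 1)%nat with k by lia.
        replace (S (S k) - 1)%nat with (S k) by lia. rewrite !C_nn. simpl. ring.
      * replace (S k <=? m)%nat with false by (symmetry; apply Nat.leb_gt; lia).
        replace (S (S k) <=? m)%nat with false by (symmetry; apply Nat.leb_gt; lia).
        replace (S (S k) <=? S m)%nat with false by (symmetry; apply Nat.leb_gt; lia). ring.
Qed.

Lemma psum_deriv c p y : is_derive (psum c (S p)) y (psum (fun j => INR (S j) * c (S j)) p y).
Proof. induction p.
- unfold psum; simpl. apply (is_derive_ext (fun _ => c O)). intros; simpl; ring.
  auto_derive; auto.
- apply (is_derive_ext (fun y => psum c (S p) y + c (S p) * y ^ (S p))).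
  intros; reflexivity.
  replace (psum (fun j : nat => INR (S j) * c (S j)) (S p) y) with
    (psum (fun j : nat => INR (S j) * c (S j)) p y + c (S p) * (INR (S p) * y ^ p)).
  apply (is_derive_plus (fun y => psum c (S p) y) (fun y => c (S p) * y ^ (S p))). exact IHp.
  apply is_derive_scal. apply (is_derive_ext (fun y => pow y (S p))); [intros; reflexivity|].
  apply is_derive_Reals. apply derivable_pt_lim_pow.
  unfold psum; simpl; ring.
Qed.

Lemma psum_at0 c q : psum c (S q) 0 = c O.
Proof. rewrite psum_S. ring. Qed.

Lemma psum_scale c q a u : psum c q (a * u) = psum (fun m => c m * a ^ m) q u.
Proof. unfold psum. apply ssum_ext. intros. rewrite Rpow_mult_distr. ring. Qed.

Lemma psum_geo p y : 1 + y <> 0 -> psum (fun j => (-1) ^ j) p y = (1 - (- y) ^ p) / (1 + y).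
Proof. intros Hy. induction p. unfold psum; simpl; field; auto.
  unfold psum in *; simpl ssum. rewrite IHp. simpl. replace ((-y) ^ p) with ((-1)^p * y^p).
  field. auto. rewrite <- Rpow_mult_distr. f_equal; ring. Qed.

Definition lnc (m : nat) : R := match m with O => 0 | S j => (-1) ^ j / INR (S j) end.

Lemma ln_taylor p x : 0 <= x -> Rabs (ln (1 + x) - psum lnc (S p) x) <= x ^ (S p).
Proof. intros Hx. destruct (Req_dec x 0) as [->|Hx0].
  { rewrite psum_at0. simpl. rewrite Rplus_0_r, ln_1. rewrite Rminus_0_r, Rabs_R0. lra. }
  set (Rf := fun y => ln (1 + y) - psum lnc (S p) y).
  set (dR := fun y => / (1 + y) - psum (fun j => INR (S j) * lnc (S j)) p y).
  assert (HD : forall y, -1 < y -> is_derive Rf y (dR y)).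
  { intros y Hy. unfold Rf, dR. apply (is_derive_minus (fun y => ln (1+y)) (psum lnc (S p))).
    - auto_derive. lra. field. lra.
    - apply psum_deriv. }
  destruct (MVT_gen Rf 0 x dR) as [c [Hc Heq]].
  { intros y Hy. apply HD. rewrite Rmin_left, Rmax_right in Hy by lra. lra. }
  { intros y Hy. rewrite Rmin_left, Rmax_right in Hy by lra.
    apply derivable_continuous_pt. exists (dR y). apply is_derive_Reals. apply HD. lra. }
  rewrite Rmin_left, Rmax_right in Hc by lra.
  assert (HR0 : Rf 0 = 0). { unfold Rf. rewrite psum_at0. simpl. rewrite Rplus_0_r, ln_1. ring. }
  change (Rabs (Rf x) <= x ^ S p). replace (Rf x) with (dR c * x) by (replace (Rf x) with (Rf x - Rf 0) by (rewrite HR0; ring); rewrite Heq; ring).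
  assert (HdR : dR c = (- c) ^ p / (1 + c)).
  { unfold dR. unfold psum. rewrite (ssum_ext _ (fun m => (-1) ^ m * c ^ m)).
    fold (psum (fun j => (-1) ^ j) p c). rewrite psum_geo by lra. field. lra.
    intros i _. unfold lnc. field. apply not_0_INR; lia. }
  rewrite HdR. rewrite Rabs_mult. unfold Rdiv. rewrite Rabs_mult.
  rewrite <- RPow_abs, Rabs_Ropp, (Rabs_pos_eq c), (Rabs_pos_eq x), (Rabs_pos_eq (/ (1 + c))) by
    (try apply Rlt_le, Rinv_0_lt_compat; lra).
  simpl. rewrite Rmult_comm.
  assert (c ^ p <= x ^ p) by (apply pow_incr; lra).
  assert (/ (1 + c) <= 1) by (apply Rle_trans with (/1); [apply Rinv_le_contravar; lra|lra]).
  assert (0 <= c ^ p) by (apply pow_le; lra).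
  assert (0 < / (1 + c)) by (apply Rinv_0_lt_compat; lra).
  apply Rmult_le_compat_l; [lra|]. nra.
Qed.

Lemma asym_ln a p : 0 < a -> asym (fun u => ln (1 + a * u)) (fun m => lnc m * a ^ m) p.
Proof. intros Ha. apply (asym_weak_le p (S p)); [lia|].
  apply asym_iff. exists (a ^ S p). intros u Hu. rewrite <- psum_scale.
  rewrite <- Rpow_mult_distr. apply ln_taylor. nra. Qed.

Lemma series_bound (a : nat -> R) (F : R -> R) :
  (forall s, 0 < s < 1 -> is_series (fun m => a m * s ^ m) (F s)) ->
  exists K, forall s, 0 < s <= 1/2 -> Rabs (F s) <= K.
Proof. intros H.
  set (b := fun m => a m * (3/4) ^ m).
  assert (Hb : is_lim_seq b 0).
  { apply ex_series_lim_0. eexists. apply (H (3/4)). lra. }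
  apply is_lim_seq_spec in Hb. destruct (Hb (mkposreal 1 Rlt_0_1)) as [N HN]. simpl in HN.
  set (K0 := 1 + ssum (fun m => Rabs (b m)) N).
  assert (HK0 : forall m, Rabs (b m) <= K0).
  { intros m. unfold K0. destruct (Nat.lt_ge_cases m N) as [Hm|Hm].
    - pose proof (ssum_ge_term (fun m => Rabs (b m)) N m (fun i => Rabs_pos _) Hm). simpl in H0. lra.
    - specialize (HN m Hm). rewrite Rminus_0_r in HN.
      pose proof (ssum_nonneg (fun m => Rabs (b m)) N (fun i => Rabs_pos _)). lra. }
  exists (K0 * 3). intros s Hs.
  set (c := fun m => a m * s ^ m).
  assert (Hc : forall m, Rabs (c m) <= K0 * (2/3) ^ m).
  { intros m. unfold c. replace (a m * s ^ m) with (b m * (4/3 * s) ^ m).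
    rewrite Rabs_mult. apply Rmult_le_compat; try apply Rabs_pos; auto.
    rewrite <- RPow_abs. apply pow_incr. rewrite Rabs_pos_eq; lra.
    unfold b. rewrite Rmult_assoc, <- Rpow_mult_distr. f_equal. f_equal. field. }
  assert (Hg : is_series (fun m => K0 * (2/3) ^ m) (K0 * 3)).
  { replace (K0 * 3) with (K0 * / (1 - 2/3)) by field.
    exact (is_series_scal K0 _ _ (is_series_geom (2/3) ltac:(rewrite Rabs_pos_eq; lra))). }
  assert (Hex : ex_series (fun m => Rabs (c m))).
  { apply (@ex_series_le R_AbsRing R_CompleteNormedModule (fun m => Rabs (c m)) (fun m => K0 * (2/3) ^ m)). intros m. change (norm (Rabs (c m))) with (Rabs (Rabs (c m))).
    rewrite Rabs_Rabsolu. auto. eexists; exact Hg. }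
  replace (F s) with (Series c) by (apply is_series_unique; apply H; lra).
  eapply Rle_trans; [apply Series_Rabs; exact Hex|].
  rewrite <- (is_series_unique _ _ Hg). apply Series_le. intros; split; [apply Rabs_pos|auto].
  eexists; exact Hg.
Qed.

Lemma series_asym p : forall (a : nat -> R) (F : R -> R),
  (forall s, 0 < s < 1 -> is_series (fun m => a m * s ^ m) (F s)) -> asym F a p.
Proof. induction p; intros a F H.
- simpl. apply (series_bound a F H).
- simpl. apply IHp. intros s Hs.
  assert (H1 : is_series (fun k => a (S k) * s ^ (S k)) (F s - a O)).
  { apply (is_series_incr_1 (fun m => a m * s ^ m)).
    match goal with |- is_series _ ?l => replace l with (F s) end.
    apply H; lra. change (F s = F s - a O + a O * s ^ 0). simpl; ring. }
  apply (is_series_scal (/ s)) in H1.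
  replace ((F s - a O) / s) with (/ s * (F s - a O)) by (field; lra).
  eapply is_series_ext; [|exact H1]. intros n. change (scal (/ s) (a (S n) * s ^ S n)) with (/ s * (a (S n) * s ^ S n)).
  change (/ s * (a (S n) * s ^ S n) = a (S n) * s ^ n). simpl. field. lra.
Qed.

Lemma asym_exp a p : asym (fun s => exp (a * s)) (fun m => a ^ m / INR (Factorial.fact m)) p.
Proof. apply series_asym. intros s Hs. pose proof (is_exp_Reals (a * s)) as He.
  unfold is_pseries in He. eapply is_series_ext; [|exact He]. intros n.
  rewrite pow_n_pow. change ((a * s) ^ n * / INR (Factorial.fact n) = a ^ n / INR (Factorial.fact n) * s ^ n).
  rewrite Rpow_mult_distr. field. apply INR_fact_neq_0. Qed.

Lemma conv_cid_0 X : conv cid X O = 0.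
Proof. rewrite conv_0. simpl. ring. Qed.
Lemma conv_cid_S m : forall X, conv cid X (S m) = X m.
Proof. induction m; intros X.
- rewrite conv_S, conv_0. simpl. ring.
- rewrite conv_S, IHm. simpl. ring. Qed.

Definition GB (x s : R) : R := s * exp (x * s) / (exp s - 1).

Lemma asym_GB B x p : is_bernoulli_polys B ->
  asym (GB x) (fun m => B m x / INR (Factorial.fact m)) p.
Proof. intros HB. apply series_asym. intros s Hs.
  eapply is_series_ext; [|apply (HB x s); [lra|rewrite Rabs_pos_eq; lra]].
  intros n. simpl. field. apply INR_fact_neq_0. Qed.

Definition Dc (B : nat -> R -> R) (m : nat) : R :=
  (2 * B m 1 - B m (1/2) - B m (3/2)) / INR (Factorial.fact m).

Definition ec (i : nat) : R := cconst 1 i + (1/2) ^ i / INR (Factorial.fact i).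

Definition rc (m : nat) : R := match m with O => 0 | S j => (1/2) ^ j / INR (Factorial.fact j) - 1 / INR (Factorial.fact j) end.

Lemma gen_identity B : is_bernoulli_polys B -> forall M, conv (Dc B) ec M = rc M.
Proof. intros HB M.
  set (Ef := fun s => 2 * GB 1 s + (-1 * GB (1/2) s + -1 * GB (3/2) s)).
  assert (A1 : asym Ef (Dc B) (S M)).
  { apply (asym_ext' _ _ _ _ _ (asym_plus _ _ _ _ _ (asym_scal _ 2 _ _ (asym_GB B 1 (S M) HB))
       (asym_plus _ _ _ _ _ (asym_scal _ (-1) _ _ (asym_GB B (1/2) (S M) HB))
                            (asym_scal _ (-1) _ _ (asym_GB B (3/2) (S M) HB))))).
    intros; reflexivity. intros i _. unfold Dc. field. apply INR_fact_neq_0. }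
  assert (A2 : asym (fun s => 1 + exp (1/2 * s)) ec (S M)).
  { exact (asym_plus _ _ _ _ _ (asym_const 1 (S M)) (asym_exp (1/2) (S M))). }
  pose proof (asym_mult _ _ _ _ _ A1 A2) as A3.
  assert (A4 : asym (fun s => s * exp (1/2 * s) + -1 * (s * exp (1 * s)))
                (fun i => conv cid (fun m => (1/2) ^ m / INR (Factorial.fact m)) i +
                          -1 * conv cid (fun m => 1 ^ m / INR (Factorial.fact m)) i) (S M)).
  { apply asym_plus. apply asym_mult. apply asym_id. apply asym_exp.
    apply asym_scal. apply asym_mult. apply asym_id. apply asym_exp. }
  assert (A5 : asym (fun s => Ef s * (1 + exp (1/2 * s))) (fun i => conv cid (fun m => (1/2) ^ m / INR (Factorial.fact m)) i +
                          -1 * conv cid (fun m => 1 ^ m / INR (Factorial.fact m)) i) (S M)).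
  { apply (asym_ext' _ _ _ _ _ A4); [|auto].
    intros s Hs. unfold Ef, GB.
    set (y := exp (1/2 * s)).
    assert (Hy1 : exp (1 * s) = y * y) by (unfold y; rewrite <- exp_plus; f_equal; field).
    assert (Hy2 : exp s = y * y) by (rewrite <- Hy1; f_equal; field).
    assert (Hy3 : exp (3/2 * s) = y * y * y) by (unfold y; rewrite <- !exp_plus; f_equal; field).
    assert (Hy0 : 1 < y) by (unfold y; rewrite <- exp_0 at 1; apply exp_increasing; lra).
    rewrite Hy1, Hy2, Hy3. fold y. field. nra. }
  pose proof (asym_unique _ _ _ _ A3 A5 M ltac:(lia)) as HU. rewrite HU.
  destruct M as [|j]. rewrite !conv_cid_0. simpl; ring.
  rewrite !conv_cid_S. simpl. rewrite pow1. ring.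
Qed.

Lemma ssum_ind_last m v : ssum (fun k => if (k =? m)%nat then v else 0) (S m) = v.
Proof. simpl. rewrite Nat.eqb_refl. rewrite ssum_zero. ring.
  intros i Hi. replace (i =? m)%nat with false by (symmetry; apply Nat.eqb_neq; lia). reflexivity. Qed.

Lemma half_pow d : (1/2) ^ d * 2 ^ d = 1.
Proof. rewrite <- Rpow_mult_distr. replace (1/2*2) with 1 by field. apply pow1. Qed.

Lemma star B : is_bernoulli_polys B -> forall m, (1 <= m)%nat ->
  lambda B m + ssum (fun k => lambda B k * Wc k m) (S m) = lnc m * 2 ^ m - lnc m.
Proof. intros HB m Hm.
  pose proof (gen_identity B HB) as HG.
  assert (D0 : Dc B 0 = 0).
  { specialize (HG O). rewrite conv_0 in HG. unfold ec, rc in HG. simpl in HG. lra. }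
  assert (D1 : Dc B 1 = 0).
  { specialize (HG 1%nat). rewrite conv_S, conv_0, D0 in HG. unfold ec, rc in HG. simpl in HG. lra. }
  set (Q := (-1) ^ m * 2 ^ m * INR (Factorial.fact (m - 1))).
  assert (L1 : lambda B m + ssum (fun k => lambda B k * Wc k m) (S m) = Q * conv (Dc B) ec (S m)).
  { unfold conv. rewrite (ssum_shift (fun i => Dc B i * ec (S m - i)%nat) (S m)). cbv beta. rewrite D0, Rmult_0_l, Rplus_0_l, <- ssum_scal.
    rewrite (ssum_ext (fun k => Q * (Dc B (S k) * ec (S m - S k)%nat))
       (fun k => lambda B k * Wc k m + (if (k =? m)%nat then lambda B m else 0))).
    rewrite ssum_plus, ssum_ind_last. ring.
    intros k Hk. replace (S m - S k)%nat with (m - k)%nat by lia.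
    destruct k as [|k'].
    - rewrite D1. destruct m as [|j]; [lia|]. simpl. ring.
    - destruct (Nat.le_exists_sub (S k') m ltac:(lia)) as [d [Hd _]]. subst m.
      unfold Wc. replace (S k' <=? d + S k')%nat with true by (symmetry; apply Nat.leb_le; lia).
      replace (d + S k' - S k')%nat with d by lia.
      replace (d + S k' - 1)%nat with (k' + d)%nat by lia.
      unfold Q. replace (d + S k' - 1)%nat with (k' + d)%nat by lia.
      unfold lambda, Dc, ec, Binomial.C. replace (k' + d - k')%nat with d by lia.
      set (X := 2 * B (S (S k')) 1 - B (S (S k')) (1 / 2) - B (S (S k')) (3 / 2)).
      rewrite !(fact_simpl (S k')), !(fact_simpl k'), !mult_INR.
      pose proof (INR_fact_neq_0 k'). pose proof (INR_fact_neq_0 d).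
      pose proof (INR_fact_neq_0 (k' + d)).
      assert (INR (S k') <> 0) by (apply not_0_INR; lia).
      assert (INR (S (S k')) <> 0) by (apply not_0_INR; lia).
      rewrite !pow_add.
      destruct d as [|d].
      + simpl cconst. rewrite Nat.eqb_refl. simpl (0 + S k')%nat. fold X.
        rewrite Nat.add_0_r. simpl pow. field. auto.
      + simpl cconst. replace (S k' =? S d + S k')%nat with false by (symmetry; apply Nat.eqb_neq; lia).
        pose proof (half_pow (S d)).
        replace (((-1) ^ S d * (-1) ^ S k')) with ((-1) ^ S k' * (-1) ^ S d) by ring.
        replace (2 ^ S d * 2 ^ S k') with (2 ^ S k' * 2 ^ S d) by ring.
        set (h := (1/2) ^ S d) in *. set (t2 := 2 ^ S d) in *.
        assert (Ht2 : t2 <> 0) by (unfold t2; apply pow_nonzero; lra).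
        replace h with (/ t2) by (apply (Rmult_eq_reg_r t2); [rewrite Rinv_l; auto; lra|auto]).
        field. repeat split; auto. }
  rewrite L1, HG. unfold rc, Q. destruct m as [|j]; [lia|].
  replace (S j - 1)%nat with j by lia. unfold lnc.
  rewrite fact_simpl, mult_INR. pose proof (INR_fact_neq_0 j).
  assert (INR (S j) <> 0) by (apply not_0_INR; lia).
  pose proof (half_pow (S j)). set (h := (1/2) ^ S j) in *.
  assert (Ht2 : 2 ^ S j <> 0) by (apply pow_nonzero; lra).
  replace h with (/ 2 ^ S j) by (apply (Rmult_eq_reg_r (2 ^ S j)); [rewrite Rinv_l; auto; lra|auto]).
  change ((-1) ^ S j) with (-1 * (-1) ^ j). field. auto.
Qed.

Lemma ssum_trunc f q r : (q <= r)%nat -> (forall i, (q <= i < r)%nat -> f i = 0) -> ssum f r = ssum f q.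
Proof. induction r; intros Hq H.
- replace q with O by lia. reflexivity.
- destruct (Nat.eq_dec q (S r)) as [->|Hn]; [reflexivity|].
  simpl. rewrite H by lia. rewrite IHr by (lia || (intros; apply H; lia)). ring. Qed.

Lemma conv_lnc_0 d : conv (fun m => lnc m * 1 ^ m) d O = 0.
Proof. rewrite conv_0. simpl. ring. Qed.

Definition lamc (B : nat -> R -> R) (K : nat) : nat -> R :=
  trunc (fun m => match m with O => 0 | _ => lambda B m end) (S K).

Lemma bound_nonneg (f : R -> R) C p : (forall u, 0 < u <= 1/2 -> Rabs (f u) <= C * u ^ p) -> 0 <= C.
Proof. intros H. specialize (H (1/2) ltac:(lra)). pose proof (Rabs_pos (f (1/2))).
  assert (0 < (1/2) ^ p) by (apply pow_lt; lra).
  destruct (Rle_lt_dec 0 C); auto. nra. Qed.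

Lemma wf_prop u : 0 < u <= 1/2 -> 0 < wf u <= 1/2 /\ wf u <= u.
Proof. intros Hu. unfold wf. split; [split|].
  apply Rdiv_lt_0_compat; lra.
  apply Rmult_le_reg_r with (1+u); [lra|]. field_simplify; lra.
  apply Rmult_le_reg_r with (1+u); [lra|]. field_simplify; nra. Qed.

Lemma H_bound B t K : is_bernoulli_polys B ->
  (forall m, (1 <= m <= K)%nat -> conv (fun m => lnc m * 1 ^ m) (trunc t (S K)) m = lambda B m) ->
  exists C, forall u, 0 < u <= 1/2 ->
    Rabs (ln (1 + 1 * u) * psum t (S K) u + ln (1 + 1 * wf u) * psum t (S K) (wf u)
          - (ln (1 + 2 * u) - ln (1 + 1 * u))) <= C * u ^ (S K).
Proof. intros HB Ht.
  set (h1 := fun u => ln (1 + 1 * u) * psum t (S K) u).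
  set (Lam := psum (lamc B K) (S K)).
  assert (A1 : asym h1 (lamc B K) (S K)).
  { apply (asym_ext' _ _ _ _ _ (asym_mult (S K) _ _ _ _ (asym_ln 1 (S K) ltac:(lra)) (asym_psum (S K) t (S K)))).
    intros; reflexivity.
    intros i Hi. destruct i as [|i]. rewrite conv_lnc_0. unfold lamc, trunc. simpl. reflexivity.
    rewrite Ht by lia. unfold lamc, trunc. replace (S i <? S K)%nat with true by (symmetry; apply Nat.ltb_lt; lia). reflexivity. }
  apply asym_iff in A1. destruct A1 as [C1 HC1]. fold Lam in HC1.
  assert (A2 : asym (fun u => Lam u + (ssum (fun k => lamc B K k * wf u ^ k) (S K) +
                                (-1 * ln (1 + 2 * u) + -1 * (-1 * ln (1 + 1 * u)))))
                (fun m => trunc (lamc B K) (S K) m + (ssum (fun k => lamc B K k * W k m) (S K) +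
                   (-1 * (lnc m * 2 ^ m) + -1 * (-1 * (lnc m * 1 ^ m))))) (S K)).
  { apply asym_plus. apply asym_psum. apply asym_plus. apply asym_lin. intros; apply asym_wpow.
    apply asym_plus; apply asym_scal. apply asym_ln; lra. apply asym_scal, asym_ln; lra. }
  assert (A3 : asym (fun u => Lam u + Lam (wf u) - (ln (1 + 2 * u) - ln (1 + 1 * u))) (fun _ => 0) (S K)).
  { apply (asym_ext' _ _ _ _ _ A2).
    - intros u Hu. unfold Lam, psum. ring.
    - intros m Hm. unfold trunc at 1. replace (m <? S K)%nat with true by (symmetry; apply Nat.ltb_lt; lia).
      rewrite (ssum_ext _ (fun k => lamc B K k * Wc k m)) by (intros; rewrite W_closed; reflexivity).
      destruct m as [|m].
      + rewrite ssum_zero. unfold lamc, trunc, lnc. simpl. ring.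
        intros [|k] _. unfold lamc, trunc. simpl. ring. unfold Wc. simpl. ring.
      + rewrite (ssum_trunc _ (S (S m)) (S K)) by (lia || (intros i Hi; unfold Wc; destruct i; [lia|];
           replace (S i <=? S m)%nat with false by (symmetry; apply Nat.leb_gt; lia); ring)).
        rewrite (ssum_ext _ (fun k => lambda B k * Wc k (S m))).
        * pose proof (star B HB (S m) ltac:(lia)) as HS.
          unfold lamc, trunc. replace (S m <? S K)%nat with true by (symmetry; apply Nat.ltb_lt; lia).
          rewrite pow1. lra.
        * intros [|k] Hk. unfold lamc, trunc, Wc. simpl. ring.
          unfold lamc, trunc. replace (S k <? S K)%nat with true by (symmetry; apply Nat.ltb_lt; lia). reflexivity. }
  apply asym_iff in A3. destruct A3 as [C2 HC2].
  pose proof (bound_nonneg _ _ _ HC1) as HC1p.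
  exists (2 * C1 + C2). intros u Hu.
  destruct (wf_prop u Hu) as [Hw1 Hw2].
  specialize (HC1 u Hu) as E1. specialize (HC1 (wf u) Hw1) as E2. specialize (HC2 u Hu) as E3.
  unfold psum in E3. rewrite ssum_zero in E3 by (intros; ring).
  assert (wf u ^ S K <= u ^ S K) by (apply pow_incr; lra).
  unfold h1 in *.
  match goal with |- Rabs ?e <= _ => replace e with
    ((ln (1 + 1 * u) * psum t (S K) u - Lam u) + (ln (1 + 1 * wf u) * psum t (S K) (wf u) - Lam (wf u))
     + (Lam u + Lam (wf u) - (ln (1 + 2 * u) - ln (1 + 1 * u)) - 0)) by ring end.
  eapply Rle_trans; [apply Rabs_triang|]. eapply Rle_trans; [apply Rplus_le_compat_r, Rabs_triang|].
  assert (C1 * wf u ^ S K <= C1 * u ^ S K) by (apply Rmult_le_compat_l; auto).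
  lra.
Qed.

Lemma RInt_mono_int (f : R -> R) a0 b0 a b :
  (forall t, 0 < t -> continuous f t) -> (forall t, 0 < t -> 0 <= f t) ->
  0 < a -> a <= a0 -> a0 <= b0 -> b0 <= b -> RInt f a0 b0 <= RInt f a b.
Proof. intros Hc Hp Ha H1 H2 H3.
  assert (Hex : forall u v, 0 < u -> u <= v -> ex_RInt f u v).
  { intros u v Hu Huv. apply (@ex_RInt_continuous R_CompleteNormedModule). intros z Hz. apply Hc.
    rewrite Rmin_left in Hz by lra. lra. }
  rewrite <- (RInt_Chasles f a a0 b) by (apply Hex; lra).
  rewrite <- (RInt_Chasles f a0 b0 b) by (apply Hex; lra).
  assert (0 <= RInt f a a0) by (apply RInt_ge_0; [lra|apply Hex; lra|intros; apply Hp; lra]).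
  assert (0 <= RInt f b0 b) by (apply RInt_ge_0; [lra|apply Hex; lra|intros; apply Hp; lra]).
  change (plus (RInt f a a0) (plus (RInt f a0 b0) (RInt f b0 b))) with
    (RInt f a a0 + (RInt f a0 b0 + RInt f b0 b)). lra. Qed.

Lemma improper_sup (f : R -> R) (M : R) :
  (forall t, 0 < t -> continuous f t) -> (forall t, 0 < t -> 0 <= f t) ->
  (forall a b, 0 < a <= b -> RInt f a b <= M) ->
  (forall a b, 0 < a <= b -> RInt f a b <= RInt_gen f (at_right 0) (Rbar_locally p_infty)) /\
  (forall eps, 0 < eps -> exists a b, 0 < a <= b /\ RInt_gen f (at_right 0) (Rbar_locally p_infty) - eps < RInt f a b).
Proof. intros Hc Hp HM.
  set (E := fun y => exists a b, 0 < a <= b /\ y = RInt f a b).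
  destruct (completeness E) as [L [HL1 HL2]].
  { exists M. intros y [a [b [Hab ->]]]. auto. }
  { exists (RInt f 1 1). exists 1, 1. split; [lra|auto]. }
  assert (Hex : forall u v, 0 < u -> u <= v -> ex_RInt f u v).
  { intros u v Hu Huv. apply (@ex_RInt_continuous R_CompleteNormedModule). intros z Hz. apply Hc.
    rewrite Rmin_left in Hz by lra. lra. }
  assert (Happ : forall eps, 0 < eps -> exists a b, 0 < a <= b /\ L - eps < RInt f a b).
  { intros eps Heps. apply Classical_Prop.NNPP. intros Hn.
    assert (L <= L - eps); [|lra]. apply HL2. intros y [a [b [Hab ->]]].
    destruct (Rle_lt_dec (RInt f a b) (L - eps)) as [|Hlt]; auto.
    exfalso; apply Hn; exists a, b; auto. }
  assert (HG : is_RInt_gen f (at_right 0) (Rbar_locally p_infty) L).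
  { intros P [eps HP]. destruct (Happ eps (cond_pos eps)) as [a0 [b0 [Hab0 H0]]].
    apply Filter_prod with (fun a => 0 < a < a0) (fun b => b0 < b).
    - exists (mkposreal a0 (proj1 Hab0)). intros y Hy Hy0. split; auto.
      change (Rabs (y - 0) < a0) in Hy. rewrite Rminus_0_r in Hy. apply Rabs_def2 in Hy. lra.
    - exists b0. auto.
    - intros a b Ha Hb. simpl. exists (RInt f a b). split.
      + apply (@RInt_correct R_CompleteNormedModule). apply Hex; lra.
      + apply HP. change (Rabs (RInt f a b - L) < eps).
        assert (RInt f a b <= L) by (apply HL1; exists a, b; split; [lra|auto]).
        assert (RInt f a0 b0 <= RInt f a b) by (apply RInt_mono_int; auto; lra).
        apply Rabs_def1; lra. }
  assert (HU : RInt_gen f (at_right 0) (Rbar_locally p_infty) = L).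
  { apply (is_RInt_gen_unique (Fa := at_right 0) (Fb := Rbar_locally p_infty)); auto. }
  rewrite HU. split; auto. intros a b Hab. apply HL1. exists a, b; auto.
Qed.

Definition gx (x t : R) : R := Rpower t (x - 1) * exp (- t).

Lemma Gamma_gx x : Gamma x = RInt_gen (gx x) (at_right 0) (Rbar_locally p_infty).
Proof. reflexivity. Qed.

Lemma exp_mono a b : a <= b -> exp a <= exp b.
Proof. intros H. destruct (Rle_lt_or_eq_dec a b H) as [H' | ->]. apply Rlt_le, exp_increasing; auto. lra. Qed.

Lemma gx_cont x t : 0 < t -> continuous (gx x) t.
Proof. intros Ht. apply (@ex_derive_continuous R_AbsRing R_NormedModule). unfold gx, Rpower. auto_derive. lra. Qed.

Lemma gx_pos x t : 0 <= gx x t.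
Proof. unfold gx, Rpower. pose proof (exp_pos ((x-1) * ln t)). pose proof (exp_pos (-t)). nra. Qed.

Lemma gx_bound x t : 1 <= x -> 0 < t -> gx x t <= exp (2 * (x - 1) ^ 2) * exp (- t / 2).
Proof. intros Hx Ht. unfold gx, Rpower. rewrite <- !exp_plus. apply exp_mono.
  set (s := sqrt t). assert (Hs : 0 < s) by (apply sqrt_lt_R0; lra).
  assert (Hss : s * s = t) by (apply sqrt_sqrt; lra).
  assert (Hl : ln t = ln s + ln s) by (rewrite <- Hss; apply ln_mult; lra).
  assert (Hls : 1 + ln s <= s) by (pose proof (exp_ineq1_le (ln s)); rewrite exp_ln in H; lra).
  rewrite Hl. assert ((x-1) * ln s <= (x-1) * (s - 1)) by (apply Rmult_le_compat_l; lra).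
  rewrite <- Hss. pose proof (pow2_ge_0 (x - 1 - s/2)). nra. Qed.

Lemma RInt_decay a b : 0 <= a -> a <= b -> RInt (fun t => exp (- t / 2)) a b <= 2.
Proof. intros Ha Hab.
  assert (H : is_RInt (fun t => exp (- t / 2)) a b (minus (-2 * exp (- b / 2)) (-2 * exp (- a / 2)))).
  { apply (is_RInt_derive (fun t => -2 * exp (- t / 2))).
    - intros x _. auto_derive. auto. set (E := exp _). match goal with |- _ = ?r => change r with E end. field.
    - intros x _. apply (@ex_derive_continuous R_AbsRing R_NormedModule). auto_derive. auto. }
  rewrite (is_RInt_unique _ _ _ _ H). change (-2 * exp (- b / 2) - -2 * exp (- a / 2) <= 2).
  pose proof (exp_pos (- b / 2)). assert (exp (- a / 2) <= 1) by (rewrite <- exp_0; apply exp_mono; lra).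
  lra. Qed.

Lemma ex_gx x a b : 0 < a -> a <= b -> ex_RInt (gx x) a b.
Proof. intros. apply (@ex_RInt_continuous R_CompleteNormedModule). intros z Hz. apply gx_cont.
  rewrite Rmin_left in Hz by lra. lra. Qed.

Lemma Gamma_char x : 1 <= x ->
  (forall a b, 0 < a <= b -> RInt (gx x) a b <= Gamma x) /\
  (forall eps, 0 < eps -> exists a b, 0 < a <= b /\ Gamma x - eps < RInt (gx x) a b).
Proof. intros Hx. rewrite Gamma_gx. apply (improper_sup _ (exp (2 * (x - 1) ^ 2) * 2)).
  - intros; apply gx_cont; auto.
  - intros; apply gx_pos.
  - intros a b Hab. set (K := exp (2 * (x - 1) ^ 2)).
    assert (Hd : ex_RInt (fun t => exp (- t / 2)) a b).
    { apply (@ex_RInt_continuous R_CompleteNormedModule). intros z Hz.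
      apply (@ex_derive_continuous R_AbsRing R_NormedModule). auto_derive. auto. }
    apply Rle_trans with (RInt (fun t => K * exp (- t / 2)) a b).
    + apply RInt_le. lra. apply ex_gx; lra. exact (ex_RInt_scal (V:=R_NormedModule) (fun t => exp (-t/2)) a b K Hd).
      intros t Ht. apply gx_bound; lra.
    + pose proof (RInt_scal (V:=R_CompleteNormedModule) (fun t => exp(-t/2)) a b K Hd) as HS.
      change (RInt (fun t => K * exp (- t / 2)) a b = K * RInt (fun t => exp (- t / 2)) a b) in HS.
      rewrite HS.
      apply Rmult_le_compat_l. unfold K; apply Rlt_le, exp_pos. apply RInt_decay; lra.
Qed.

Lemma Gamma_ge x a b : 1 <= x -> 0 < a <= b -> RInt (gx x) a b <= Gamma x.
Proof. intros Hx Hab. apply (proj1 (Gamma_char x Hx)); auto. Qed.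

Lemma Gamma_le x c : 1 <= x -> (forall a b, 0 < a <= b -> RInt (gx x) a b <= c) -> Gamma x <= c.
Proof. intros Hx H. destruct (Rle_lt_dec (Gamma x) c) as [|Hlt]; auto.
  destruct (proj2 (Gamma_char x Hx) (Gamma x - c) ltac:(lra)) as [a [b [Hab Hv]]].
  specialize (H a b Hab). lra. Qed.

Lemma Gamma_pos x : 1 <= x -> 0 < Gamma x.
Proof. intros Hx. apply Rlt_le_trans with (RInt (gx x) 1 2); [|apply Gamma_ge; lra].
  apply Rlt_le_trans with (RInt (fun _ => exp (-2)) 1 2).
  - rewrite RInt_const. change ((2 - 1) * exp (-2) > 0). pose proof (exp_pos (-2)). lra.
  - apply RInt_le; [lra|apply ex_RInt_const|apply ex_gx; lra|].
    intros t Ht. unfold gx, Rpower. rewrite <- (Rmult_1_l (exp (-2))).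
    assert (0 <= ln t) by (rewrite <- ln_1; apply ln_le; lra).
    assert (1 <= exp ((x - 1) * ln t)) by (rewrite <- exp_0 at 1; apply exp_mono; nra).
    assert (exp (-2) <= exp (- t)) by (apply exp_mono; lra).
    pose proof (exp_pos (-2)). apply Rmult_le_compat; lra.
Qed.

Lemma RInt_lin2 f g a b p q : ex_RInt f a b -> ex_RInt g a b ->
  RInt (fun t => p * f t + q * g t) a b = p * RInt f a b + q * RInt g a b.
Proof. intros Hf Hg.
  pose proof (RInt_correct (V:=R_CompleteNormedModule) f a b Hf) as If.
  pose proof (RInt_correct (V:=R_CompleteNormedModule) g a b Hg) as Ig.
  pose proof (is_RInt_plus _ _ _ _ _ _ (is_RInt_scal _ _ _ p _ If) (is_RInt_scal _ _ _ q _ Ig)) as I.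
  apply is_RInt_unique in I. exact I. Qed.

Lemma gx_deriv x t : 0 < t ->
  is_derive (fun t => - (Rpower t x * exp (- t))) t (gx (x + 1) t + - x * gx x t).
Proof. intros Ht. unfold gx, Rpower. auto_derive. auto.
  replace (x + 1 - 1) with x by ring.
  assert (E : exp ((x - 1) * ln t) = exp (x * ln t) / t).
  { replace ((x - 1) * ln t) with (x * ln t + - ln t) by ring. rewrite exp_plus, exp_Ropp, exp_ln by lra.
    field. lra. }
  rewrite E. field. lra. Qed.

Lemma IBP x a b : 0 < a -> a <= b ->
  RInt (gx (x + 1)) a b = x * RInt (gx x) a b + (Rpower a x * exp (- a) - Rpower b x * exp (- b)).
Proof. intros Ha Hab.
  assert (I4 : is_RInt (fun t => gx (x + 1) t + - x * gx x t) a b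
     (minus (- (Rpower b x * exp (- b))) (- (Rpower a x * exp (- a))))).
  { apply (is_RInt_derive (fun t => - (Rpower t x * exp (- t)))).
    - intros t Ht. rewrite Rmin_left, Rmax_right in Ht by lra. apply gx_deriv. lra.
    - intros t Ht. rewrite Rmin_left, Rmax_right in Ht by lra.
      apply (@ex_derive_continuous R_AbsRing R_NormedModule). unfold gx, Rpower. auto_derive. lra. }
  apply (is_RInt_unique (V:=R_CompleteNormedModule)) in I4.
  rewrite (RInt_ext (V:=R_CompleteNormedModule) _ (fun t => 1 * gx (x + 1) t + - x * gx x t)) in I4 by (intros t _; change (gx (x + 1) t + - x * gx x t = 1 * gx (x + 1) t + - x * gx x t); ring).
  rewrite RInt_lin2 in I4 by (apply ex_gx; lra).
  change (1 * RInt (gx (x + 1)) a b + - x * RInt (gx x) a b =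
     - (Rpower b x * exp (- b)) - - (Rpower a x * exp (- a))) in I4. lra. Qed.

Lemma Rpower_small a x : 0 < a <= 1 -> 1 <= x -> Rpower a x <= a.
Proof. intros Ha Hx. unfold Rpower. rewrite <- (exp_ln a) at 2 by lra. apply exp_mono.
  assert (ln a <= 0) by (rewrite <- ln_1; apply ln_le; lra). nra. Qed.

Lemma exp_half_small b : 0 < b -> exp (- b / 2) <= 2 / b.
Proof. intros Hb. pose proof (exp_ineq1_le (b / 2)). pose proof (exp_pos (b/2)).
  replace (- b / 2) with (- (b / 2)) by field. rewrite exp_Ropp.
  apply Rmult_le_reg_r with (exp (b/2)); [lra|]. rewrite Rinv_l by lra.
  apply Rmult_le_reg_l with b; [lra|]. field_simplify; lra. Qed.

Lemma Gamma_succ x : 1 <= x -> Gamma (x + 1) = x * Gamma x.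
Proof. intros Hx. apply Rle_antisym.
- apply Gamma_le; [lra|]. intros a b Hab.
  destruct (Rle_lt_dec (RInt (gx (x + 1)) a b) (x * Gamma x)) as [|Hlt]; auto. exfalso.
  set (v := RInt (gx (x + 1)) a b) in *.
  set (a' := Rmin a (Rmin 1 ((v - x * Gamma x) / 2))).
  assert (Ha'1 : a' <= a) by apply Rmin_l.
  assert (Ha'2 : a' <= 1) by (apply Rle_trans with (Rmin 1 ((v - x * Gamma x) / 2)); [apply Rmin_r|apply Rmin_l]).
  assert (Ha'3 : a' <= (v - x * Gamma x) / 2) by (apply Rle_trans with (Rmin 1 ((v - x * Gamma x) / 2)); apply Rmin_r).
  assert (Ha'0 : 0 < a'). { unfold a'. repeat apply Rmin_glb_lt; lra. }
  assert (H1 : v <= RInt (gx (x + 1)) a' b) by (apply RInt_mono_int; [intros; apply gx_cont; auto|intros; apply gx_pos|lra|lra|lra|lra]).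
  rewrite IBP in H1 by lra.
  assert (H2 : RInt (gx x) a' b <= Gamma x) by (apply Gamma_ge; lra).
  assert (H3 : Rpower a' x <= a') by (apply Rpower_small; lra).
  assert (H4 : exp (- a') <= 1) by (rewrite <- exp_0; apply exp_mono; lra).
  assert (H5 : 0 <= Rpower b x * exp (- b)) by (unfold Rpower; pose proof (exp_pos (x * ln b)); pose proof (exp_pos (-b)); nra).
  assert (H6 : 0 <= Rpower a' x) by (unfold Rpower; apply Rlt_le, exp_pos).
  assert (Rpower a' x * exp (- a') <= a') by (pose proof (exp_pos (- a')); nra).
  assert (x * RInt (gx x) a' b <= x * Gamma x) by (apply Rmult_le_compat_l; lra).
  lra.
- assert (HG : Gamma x <= Gamma (x + 1) / x).
  { apply Gamma_le; [lra|]. intros a b Hab.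
    destruct (Rle_lt_dec (RInt (gx x) a b) (Gamma (x + 1) / x)) as [|Hlt]; auto. exfalso.
    set (v := RInt (gx x) a b) in *.
    set (K := exp (2 * (x + 1 - 1) ^ 2)).
    assert (HK : 0 < K) by apply exp_pos.
    set (eps := x * v - Gamma (x + 1)).
    assert (Heps : 0 < eps). { unfold eps. apply Rmult_lt_compat_l with (r := x) in Hlt; [|lra].
      replace (x * (Gamma (x + 1) / x)) with (Gamma (x + 1)) in Hlt by (field; lra). lra. }
    set (b' := Rmax b (2 * K / eps + 1)).
    assert (Hb1 : b <= b') by apply Rmax_l. assert (Hb2 : 2 * K / eps + 1 <= b') by apply Rmax_r.
    assert (Hb0 : 0 < b') by (assert (0 < 2 * K / eps) by (apply Rdiv_lt_0_compat; lra); lra).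
    assert (H1 : v <= RInt (gx x) a b') by (apply RInt_mono_int; [intros; apply gx_cont; auto|intros; apply gx_pos|lra|lra|lra|lra]).
    pose proof (IBP x a b' ltac:(lra) ltac:(lra)) as H2.
    assert (H3 : RInt (gx (x + 1)) a b' <= Gamma (x + 1)) by (apply Gamma_ge; lra).
    assert (H4 : 0 <= Rpower a x * exp (- a)) by (unfold Rpower; pose proof (exp_pos (x * ln a)); pose proof (exp_pos (-a)); nra).
    assert (H5 : Rpower b' x * exp (- b') <= K * (2 / b')).
    { replace (Rpower b' x * exp (- b')) with (gx (x + 1) b') by (unfold gx; f_equal; f_equal; ring).
      eapply Rle_trans; [apply gx_bound; lra|]. apply Rmult_le_compat_l; [lra|]. apply exp_half_small; lra. }
    assert (H6 : K * (2 / b') < eps).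
    { apply Rmult_lt_reg_r with b'; [lra|]. replace (K * (2 / b') * b') with (2 * K) by (field; lra).
      assert (2 * K / eps < b') by lra.
      apply Rmult_lt_compat_l with (r := eps) in H; [|lra].
      replace (eps * (2 * K / eps)) with (2 * K) in H by (field; lra). lra. }
    assert (x * v <= x * RInt (gx x) a b') by (apply Rmult_le_compat_l; lra).
    unfold eps in *. lra. }
  apply Rmult_le_compat_l with (r := x) in HG; [|lra].
  replace (x * (Gamma (x + 1) / x)) with (Gamma (x + 1)) in HG by (field; lra). lra.
Qed.

Lemma Gamma_conv x : 3/2 <= x -> Gamma x ^ 2 <= Gamma (x - 1/2) * Gamma (x + 1/2).
Proof. intros Hx.
  pose proof (Gamma_pos x ltac:(lra)) as P0.
  pose proof (Gamma_pos (x - 1/2) ltac:(lra)) as P1.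
  pose proof (Gamma_pos (x + 1/2) ltac:(lra)) as P2.
  assert (Hpt : forall s t, 0 < s -> 0 < t -> gx x t <= (s * gx (x - 1/2) t + / s * gx (x + 1/2) t) / 2).
  { intros s t Hs Ht. unfold gx.
    set (A := Rpower t (x - 3/2)). set (w := Rpower t (1/2)). set (e := exp (- t)).
    assert (E1 : Rpower t (x - 1) = A * w) by (unfold A, w; rewrite <- Rpower_plus; f_equal; field).
    assert (E2 : Rpower t (x - 1/2 - 1) = A) by (unfold A; f_equal; field).
    assert (E3 : Rpower t (x + 1/2 - 1) = A * w * w) by (unfold A, w; rewrite <- !Rpower_plus; f_equal; field).
    rewrite E1, E2, E3.
    assert (HA : 0 < A) by (unfold A, Rpower; apply exp_pos).
    assert (He : 0 < e) by (unfold e; apply exp_pos).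
    assert (Hid : (s * (A * e) + / s * (A * w * w * e)) / 2 - A * w * e = A * e * (s - w) ^ 2 / (2 * s)) by (field; lra).
    assert (0 <= A * e * (s - w) ^ 2 / (2 * s)).
    { apply Rmult_le_pos. apply Rmult_le_pos; [apply Rmult_le_pos; lra|apply pow2_ge_0]. apply Rlt_le, Rinv_0_lt_compat; lra. }
    lra. }
  set (s := Gamma x / Gamma (x - 1/2)).
  assert (Hs : 0 < s) by (apply Rdiv_lt_0_compat; lra).
  assert (HG : Gamma x <= (s * Gamma (x - 1/2) + / s * Gamma (x + 1/2)) / 2).
  { apply Gamma_le; [lra|]. intros a b Hab.
    apply Rle_trans with (RInt (fun t => (s / 2) * gx (x - 1/2) t + (/ s / 2) * gx (x + 1/2) t) a b).
    - apply RInt_le; [lra|apply ex_gx; lra| |].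
      + apply (ex_RInt_plus (V:=R_NormedModule)); apply (ex_RInt_scal (V:=R_NormedModule)); apply ex_gx; lra.
      + intros t Ht. specialize (Hpt s t Hs ltac:(lra)). lra.
    - rewrite RInt_lin2 by (apply ex_gx; lra).
      assert (RInt (gx (x - 1/2)) a b <= Gamma (x - 1/2)) by (apply Gamma_ge; lra).
      assert (RInt (gx (x + 1/2)) a b <= Gamma (x + 1/2)) by (apply Gamma_ge; lra).
      assert (0 < / s) by (apply Rinv_0_lt_compat; lra).
      assert (s / 2 * RInt (gx (x - 1 / 2)) a b <= s / 2 * Gamma (x - 1/2)) by (apply Rmult_le_compat_l; lra).
      assert (/ s / 2 * RInt (gx (x + 1 / 2)) a b <= / s / 2 * Gamma (x + 1/2)) by (apply Rmult_le_compat_l; lra).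
      lra. }
  unfold s in HG.
  replace (Gamma x / Gamma (x - 1 / 2) * Gamma (x - 1 / 2)) with (Gamma x) in HG by (field; lra).
  assert (HG2 : Gamma x <= Gamma (x - 1/2) * Gamma (x + 1/2) / Gamma x).
  { rewrite Rinv_div in HG. replace (Gamma (x - 1 / 2) * Gamma (x + 1 / 2) / Gamma x) with
      (Gamma (x - 1 / 2) / Gamma x * Gamma (x + 1 / 2)) by (field; lra). lra. }
  apply Rmult_le_compat_l with (r := Gamma x) in HG2; [|lra].
  replace (Gamma x * (Gamma (x - 1 / 2) * Gamma (x + 1 / 2) / Gamma x)) with (Gamma (x - 1 / 2) * Gamma (x + 1 / 2)) in HG2 by (field; lra).
  simpl. lra.
Qed.

Definition rat (n : nat) : R := Omega n ^ 2 / (Omega (n - 1) * Omega (n + 1)).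

Lemma rat_eq n : (1 <= n)%nat ->
  rat n = Gamma (INR n / 2 + 1/2) * Gamma (INR n / 2 + 3/2) / Gamma (INR n / 2 + 1) ^ 2.
Proof. intros Hn. unfold rat, Omega.
  replace (INR (n - 1) / 2 + 1) with (INR n / 2 + 1/2) by (rewrite minus_INR by lia; simpl; field).
  replace (INR (n + 1) / 2 + 1) with (INR n / 2 + 3/2) by (rewrite plus_INR; simpl; field).
  assert (E : Rpower PI (INR (n - 1) / 2) * Rpower PI (INR (n + 1) / 2) = Rpower PI (INR n / 2) ^ 2).
  { simpl. rewrite Rmult_1_r, <- !Rpower_plus. f_equal. rewrite minus_INR, plus_INR by lia. simpl. field. }
  assert (Hn' : 1 <= INR n) by (apply (le_INR 1 n); lia).
  pose proof (Gamma_pos (INR n / 2 + 1/2) ltac:(lra)).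
  pose proof (Gamma_pos (INR n / 2 + 3/2) ltac:(lra)).
  pose proof (Gamma_pos (INR n / 2 + 1) ltac:(lra)).
  assert (0 < Rpower PI (INR (n - 1) / 2)) by (unfold Rpower; apply exp_pos).
  assert (0 < Rpower PI (INR (n + 1) / 2)) by (unfold Rpower; apply exp_pos).
  assert (0 < Rpower PI (INR n / 2)) by (unfold Rpower; apply exp_pos).
  replace ((Rpower PI (INR n / 2) / Gamma (INR n / 2 + 1)) ^ 2) with (Rpower PI (INR n / 2) ^ 2 / Gamma (INR n / 2 + 1) ^ 2) by (field; lra).
  rewrite <- E. field. repeat split; lra.
Qed.

Lemma INR_ge1 n : (1 <= n)%nat -> 1 <= INR n.
Proof. intros; apply (le_INR 1 n); lia. Qed.

Lemma rat_ge1 n : (1 <= n)%nat -> 1 <= rat n.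
Proof. intros Hn. rewrite rat_eq by auto. pose proof (INR_ge1 n Hn).
  pose proof (Gamma_conv (INR n / 2 + 1) ltac:(lra)) as Hc.
  replace (INR n / 2 + 1 - 1/2) with (INR n / 2 + 1/2) in Hc by field.
  replace (INR n / 2 + 1 + 1/2) with (INR n / 2 + 3/2) in Hc by field.
  pose proof (Gamma_pos (INR n / 2 + 1) ltac:(lra)).
  assert (0 < Gamma (INR n / 2 + 1) ^ 2) by (apply pow_lt; lra).
  apply Rmult_le_reg_r with (Gamma (INR n / 2 + 1) ^ 2); [lra|].
  unfold Rdiv. rewrite Rmult_assoc, Rinv_l by lra. lra. Qed.

Lemma rat_prod n : (1 <= n)%nat -> rat n * rat (S n) = (INR n + 2) / (INR n + 1).
Proof. intros Hn. rewrite !rat_eq by lia. rewrite S_INR. pose proof (INR_ge1 n Hn).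
  replace ((INR n + 1) / 2 + 1 / 2) with (INR n / 2 + 1) by field.
  replace ((INR n + 1) / 2 + 3 / 2) with ((INR n / 2 + 1) + 1) by field.
  replace ((INR n + 1) / 2 + 1) with ((INR n / 2 + 1/2) + 1) by field.
  replace (INR n / 2 + 3 / 2) with ((INR n / 2 + 1/2) + 1) by field.
  rewrite (Gamma_succ (INR n / 2 + 1/2)) by lra.
  pose proof (Gamma_pos (INR n / 2 + 1/2) ltac:(lra)).
  pose proof (Gamma_pos (INR n / 2 + 1) ltac:(lra)).
  rewrite (Gamma_succ (INR n / 2 + 1)) by lra. field. repeat split; lra.
Qed.

Definition fr (n : nat) : R := ln (rat n).

Lemma fr_nonneg n : (1 <= n)%nat -> 0 <= fr n.
Proof. intros Hn. unfold fr. rewrite <- ln_1. apply ln_le; [lra|]. apply rat_ge1; auto. Qed.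

Lemma fr_sum n : (1 <= n)%nat -> fr n + fr (S n) = ln (1 + 2 * / INR n) - ln (1 + 1 * / INR n).
Proof. intros Hn. unfold fr. pose proof (rat_ge1 n Hn). pose proof (rat_ge1 (S n) ltac:(lia)).
  rewrite <- ln_mult by lra. rewrite rat_prod by auto. pose proof (INR_ge1 n Hn).
  rewrite <- ln_div. f_equal. field. lra.
  assert (0 < / INR n) by (apply Rinv_0_lt_compat; lra). lra.
  assert (0 < / INR n) by (apply Rinv_0_lt_compat; lra). lra. Qed.

Lemma tail_sum n q j : (2 <= n)%nat ->
  ssum (fun k => / INR (n + k) ^ (q + 2)) j <= / INR n ^ q * (/ (INR n - 1) - / (INR n + INR j - 1)).
Proof. intros Hn. assert (Hx : 2 <= INR n) by (apply (le_INR 2 n); lia).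
  induction j.
  - simpl. rewrite Rplus_0_r. lra.
  - simpl ssum. rewrite S_INR.
    assert (E : / INR n ^ q * (/ (INR n - 1) - / (INR n + (INR j + 1) - 1)) =
       / INR n ^ q * (/ (INR n - 1) - / (INR n + INR j - 1)) + / INR n ^ q * / ((INR n + INR j - 1) * (INR n + INR j))).
    { pose proof (pos_INR j). field. repeat split; try lra. apply pow_nonzero; lra. }
    rewrite E. apply Rplus_le_compat; auto.
    rewrite plus_INR. pose proof (pos_INR j). assert (Hy : 2 <= INR n + INR j) by lra. assert (Hy2 : INR n <= INR n + INR j) by lra. set (y := INR n + INR j) in *.
    rewrite <- Rinv_mult. apply Rinv_le_contravar.
    + apply Rmult_lt_0_compat. apply pow_lt; lra. apply Rmult_lt_0_compat; lra.
    + rewrite pow_add. simpl. rewrite Rmult_1_r.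
      assert (INR n ^ q <= y ^ q) by (apply pow_incr; lra).
      assert (0 < INR n ^ q) by (apply pow_lt; lra).
      assert ((y - 1) * y <= y * y) by nra.
      apply Rmult_le_compat; try lra. nra.
Qed.

Lemma tail_sum2 n q j : (2 <= n)%nat ->
  ssum (fun k => / INR (n + k) ^ (q + 2)) j <= 2 * / INR n ^ (q + 1).
Proof. intros Hn. eapply Rle_trans; [apply tail_sum; auto|].
  assert (Hx : 2 <= INR n) by (apply (le_INR 2 n); lia). pose proof (pos_INR j).
  assert (0 < / (INR n + INR j - 1)) by (apply Rinv_0_lt_compat; lra).
  assert (0 < / INR n ^ q) by (apply Rinv_0_lt_compat, pow_lt; lra).
  apply Rle_trans with (/ INR n ^ q * / (INR n - 1)).
  - apply Rmult_le_compat_l; lra.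
  - rewrite pow_add. simpl. rewrite Rmult_1_r. rewrite Rinv_mult.
    replace (2 * (/ INR n ^ q * / INR n)) with (/ INR n ^ q * (2 / INR n)) by (field; split; [lra|apply pow_nonzero; lra]).
    apply Rmult_le_compat_l; [lra|]. apply Rmult_le_reg_l with ((INR n - 1) * INR n); [nra|].
    field_simplify; lra.
Qed.

Lemma discrete (phi Hh : nat -> R) C A q n0 : (1 <= n0)%nat ->
  (forall n, (n0 <= n)%nat -> phi n + phi (S n) = Hh n) ->
  (forall n, (n0 <= n)%nat -> Rabs (Hh n) <= C * / INR n ^ (q + 2)) ->
  (forall n, (n0 <= n)%nat -> Rabs (phi n) <= A * / INR n) ->
  forall n, (n0 <= n)%nat -> (2 <= n)%nat -> Rabs (phi n) <= 2 * C * / INR n ^ (q + 1).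
Proof. intros Hn0 Hrec HH Hd n Hn Hn2.
  assert (S1 : forall j m, (n0 <= m)%nat -> Rabs (phi m) <= ssum (fun k => Rabs (Hh (m + k)%nat)) j + Rabs (phi (m + j)%nat)).
  { induction j; intros m Hm. simpl. rewrite Nat.add_0_r. lra.
    rewrite ssum_shift. rewrite Nat.add_0_r.
    rewrite (ssum_ext (fun i => Rabs (Hh (m + S i)%nat)) (fun i => Rabs (Hh (S m + i)%nat))) by (intros; f_equal; f_equal; lia).
    replace (m + S j)%nat with (S m + j)%nat by lia.
    specialize (IHj (S m) ltac:(lia)).
    replace (phi m) with (Hh m - phi (S m)) by (rewrite <- Hrec by auto; ring).
    pose proof (Rabs_triang (Hh m) (- phi (S m))). rewrite Rabs_Ropp in H. unfold Rminus. lra. }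
  assert (Hx : 2 <= INR n) by (apply (le_INR 2 n); lia).
  assert (HC : 0 <= C).
  { specialize (HH n Hn). pose proof (Rabs_pos (Hh n)).
    assert (0 < / INR n ^ (q + 2)) by (apply Rinv_0_lt_compat, pow_lt; lra).
    destruct (Rle_lt_dec 0 C); auto. nra. }
  assert (HA : 0 <= A).
  { specialize (Hd n Hn). pose proof (Rabs_pos (phi n)).
    assert (0 < / INR n) by (apply Rinv_0_lt_compat; lra).
    destruct (Rle_lt_dec 0 A); auto. nra. }
  assert (S2 : forall j, ssum (fun k => Rabs (Hh (n + k)%nat)) j <= 2 * C * / INR n ^ (q + 1)).
  { intros j. apply Rle_trans with (ssum (fun k => C * / INR (n + k) ^ (q + 2)) j).
    - apply ssum_le. intros i _. apply HH. lia.
    - rewrite ssum_scal. replace (2 * C * / INR n ^ (q + 1)) with (C * (2 * / INR n ^ (q + 1))) by ring. apply Rmult_le_compat_l; auto. apply tail_sum2; auto. }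
  destruct (Rle_lt_dec (Rabs (phi n)) (2 * C * / INR n ^ (q + 1))) as [|Hlt]; auto. exfalso.
  set (d := Rabs (phi n) - 2 * C * / INR n ^ (q + 1)).
  assert (Hd0 : 0 < d) by (unfold d; lra).
  destruct (INR_unbounded (A / d)) as [j Hj].
  assert (Hj0 : 0 < INR j) by (assert (0 <= A / d) by (apply Rdiv_le_0_compat; lra); lra).
  specialize (S1 j n Hn). specialize (S2 j). specialize (Hd (n + j)%nat ltac:(lia)).
  rewrite plus_INR in Hd.
  assert (A * / (INR n + INR j) < d).
  { apply Rle_lt_trans with (A / INR j).
    - unfold Rdiv. apply Rmult_le_compat_l; auto. apply Rinv_le_contravar; lra.
    - apply Rmult_lt_reg_r with (INR j); [lra|]. unfold Rdiv. rewrite Rmult_assoc, Rinv_l by lra.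
      apply Rmult_lt_compat_l with (r := d) in Hj; [|lra].
      replace (d * (A / d)) with A in Hj by (field; lra). lra. }
  unfold d in *. lra.
Qed.

Lemma sum_n_m_ssum (f : nat -> R) m : sum_n_m f 1 m = ssum (fun j => f (S j)) m.
Proof. induction m.
- rewrite sum_n_m_zero by lia. reflexivity.
- rewrite sum_n_Sm by lia. rewrite IHm. reflexivity. Qed.

Lemma sum_n_ssum (f : nat -> R) N : sum_n f N = ssum f (S N).
Proof. induction N.
- rewrite sum_O. simpl. ring.
- rewrite sum_Sn, IHN. reflexivity. Qed.

Lemma tsys B t K : is_t_sequence B t -> forall m, (1 <= m <= K)%nat ->
  conv (fun m => lnc m * 1 ^ m) (trunc t (S K)) m = lambda B m.
Proof. intros [_ Hs] m Hm. rewrite <- (Hs m) by lia. rewrite sum_n_m_ssum. unfold conv.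
  rewrite ssum_shift. cbv beta. unfold lnc at 1. rewrite Rmult_0_l, Rmult_0_l, Rplus_0_l.
  apply ssum_ext. intros i Hi. unfold trunc.
  replace (m - S i <? S K)%nat with true by (symmetry; apply Nat.ltb_lt; lia).
  unfold lnc. rewrite pow1. simpl pow. field. apply not_0_INR. lia. Qed.

Lemma ln_lin u : 0 <= u -> 0 <= ln (1 + u) <= u.
Proof. intros Hu. split.
- rewrite <- ln_1. apply ln_le; lra.
- rewrite <- (ln_exp u) at 2. apply ln_le; [lra|]. apply exp_ineq1_le. Qed.

Lemma ln_diff u : 0 < u -> ln (1 + 2 * u) - ln (1 + 1 * u) <= u.
Proof. intros Hu. rewrite <- ln_div by lra.
  apply Rle_trans with (ln (1 + u)); [|apply ln_lin; lra].
  apply ln_le. apply Rdiv_lt_0_compat; lra.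
  apply Rmult_le_reg_r with (1 + 1 * u); [lra|]. field_simplify; nra. Qed.

Lemma wf_inv n : (1 <= n)%nat -> wf (/ INR n) = / INR (S n).
Proof. intros Hn. assert (1 <= INR n) by (apply (le_INR 1 n); lia). unfold wf. rewrite S_INR. field. lra. Qed.

Theorem theorem17 (B : nat -> R -> R) (t : nat -> R) :
  is_bernoulli_polys B ->
  is_t_sequence B t ->
  forall N : nat,
    exists C : R, exists M : nat,
      forall n : nat, (M <= n)%nat -> (1 <= n)%nat ->
        Rabs (ln (Omega n ^ 2 / (Omega (n - 1) * Omega (n + 1)))
              - ln (1 + 1 / INR n) * sum_n (fun j => t j / INR n ^ j) N)
        <= C / INR n ^ (N + 2).
Proof. intros HB Ht N.
  set (K := (N + 2)%nat).
  destruct (H_bound B t K HB (tsys B t K Ht)) as [C HC].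
  set (Sk := fun n : nat => ln (1 + 1 * / INR n) * psum t (S K) (/ INR n)).
  set (phi := fun n => fr n - Sk n).
  set (Hh := fun n => (ln (1 + 2 * / INR n) - ln (1 + 1 * / INR n)) - Sk n - Sk (S n)).
  set (A := 1 + ssum (fun i => Rabs (t i)) (S K)).
  assert (Hu : forall n, (2 <= n)%nat -> 0 < / INR n <= 1/2).
  { intros n Hn. assert (2 <= INR n) by (apply (le_INR 2 n); lia). split.
    apply Rinv_0_lt_compat; lra. apply Rle_trans with (/ 2); [apply Rinv_le_contravar; lra|lra]. }
  assert (Hrec : forall n, (2 <= n)%nat -> phi n + phi (S n) = Hh n).
  { intros n Hn. unfold phi, Hh. rewrite <- fr_sum by lia. ring. }
  assert (HHb : forall n, (2 <= n)%nat -> Rabs (Hh n) <= C * / INR n ^ ((N + 1) + 2)).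
  { intros n Hn. specialize (HC (/ INR n) (Hu n Hn)). rewrite wf_inv in HC by lia.
    replace ((N + 1) + 2)%nat with (S K) by (unfold K; lia). rewrite <- pow_inv.
    unfold Hh, Sk. rewrite <- Rabs_Ropp.
    match goal with |- Rabs ?e <= _ => replace e with
      (ln (1 + 1 * / INR n) * psum t (S K) (/ INR n) + ln (1 + 1 * / INR (S n)) * psum t (S K) (/ INR (S n)) -
        (ln (1 + 2 * / INR n) - ln (1 + 1 * / INR n))) by ring end. exact HC. }
  assert (Hdec : forall n, (2 <= n)%nat -> Rabs (phi n) <= A * / INR n).
  { intros n Hn. destruct (Hu n Hn) as [Hu1 Hu2]. set (u := / INR n) in *.
    assert (F0 : 0 <= fr n) by (apply fr_nonneg; lia).
    assert (F1 : 0 <= fr (S n)) by (apply fr_nonneg; lia).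
    pose proof (fr_sum n ltac:(lia)) as FS. fold u in FS.
    pose proof (ln_diff u Hu1).
    pose proof (ln_lin u ltac:(lra)) as [L0 L1].
    pose proof (psum_bound t (S K) u ltac:(lra)) as PB.
    unfold phi, Sk. fold u. replace (1 * u) with u by ring.
    eapply Rle_trans; [apply Rabs_triang|]. rewrite Rabs_Ropp, Rabs_mult, (Rabs_pos_eq (fr n)) by lra.
    rewrite (Rabs_pos_eq (ln (1 + u))) by lra.
    assert (ln (1 + u) * Rabs (psum t (S K) u) <= u * ssum (fun i => Rabs (t i)) (S K)).
    { apply Rmult_le_compat; try lra; try apply Rabs_pos. }
    unfold A. lra. }
  pose proof (discrete phi Hh C A (N + 1) 2 ltac:(lia) Hrec HHb Hdec) as Hphi.
  exists (2 * C + Rabs (t (S N)) + Rabs (t (S (S N)))), 2%nat.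
  intros n Hn _. specialize (Hphi n Hn Hn).
  replace (N + 1 + 1)%nat with (N + 2)%nat in Hphi by lia.
  destruct (Hu n Hn) as [Hu1 Hu2].
  change (ln (Omega n ^ 2 / (Omega (n - 1) * Omega (n + 1)))) with (fr n).
  rewrite sum_n_ssum.
  replace (1 / INR n) with (1 * / INR n) by reflexivity.
  assert (Epsum : psum t (S K) (/ INR n) = ssum (fun j => t j / INR n ^ j) (S N) +
            t (S N) * (/ INR n) ^ (S N) + t (S (S N)) * (/ INR n) ^ (S (S N))).
  { replace (S K) with (S (S (S N))) by (unfold K; lia). unfold psum.
    rewrite (ssum_ext (fun j => t j / INR n ^ j) (fun m => t m * (/ INR n) ^ m)) by (intros; rewrite pow_inv; reflexivity).
    reflexivity. }
  assert (Efr : fr n = phi n + Sk n) by (unfold phi; ring).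
  rewrite Efr. unfold Sk. rewrite Epsum.
  set (u := / INR n) in *. replace (1 * u) with u by ring.
  pose proof (ln_lin u ltac:(lra)) as [L0 L1].
  set (x1 := t (S N)). set (x2 := t (S (S N))).
  match goal with |- Rabs ?e <= _ => replace e with
    (phi n + ln (1 + u) * (x1 * u ^ S N + x2 * u ^ S (S N))) by ring end.
  eapply Rle_trans; [apply Rabs_triang|].
  assert (Hp : u ^ (N + 2) = / INR n ^ (N + 2)) by (unfold u; apply pow_inv).
  assert (HupN : 0 < u ^ S N) by (apply pow_lt; lra).
  assert (B1 : Rabs (ln (1 + u) * (x1 * u ^ S N + x2 * u ^ S (S N))) <= (Rabs x1 + Rabs x2) * u ^ (N + 2)).
  { rewrite Rabs_mult, (Rabs_pos_eq (ln (1 + u))) by lra.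
    eapply Rle_trans with (u * (Rabs x1 * u ^ S N + Rabs x2 * u ^ S N)).
    - apply Rmult_le_compat; try lra. apply Rabs_pos.
      eapply Rle_trans; [apply Rabs_triang|]. rewrite !Rabs_mult, !(Rabs_pos_eq (u ^ _)) by (apply pow_le; lra).
      apply Rplus_le_compat_l. apply Rmult_le_compat_l; [apply Rabs_pos|].
      simpl. assert (0 <= u * u ^ N) by (apply Rmult_le_pos; [lra|apply pow_le; lra]). nra.
    - replace (N + 2)%nat with (S (S N)) by lia. simpl. nra. }
  unfold Rdiv. change (N + 2)%nat with K in Hp, Hphi, B1. rewrite <- Hp. rewrite <- Hp in Hphi. lra.
Qed.
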